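(* Let $k$ be an infinite field. For each $i\in\mathbb{Z}$ let $M_i$ and $N_i$ be square matrices over $k$ of trace zero, of sizes $m_i$ and $n_i$ respectively. Then one can choose square matrices $p_i,q_i$ (of size $m_i$) and $s_i,t_i$ (of size $n_i$) over $k$, for all $i\in\mathbb{Z}$, such that for every $i$: (A1) $M_i=p_iq_i-q_ip_i$; (A2) $N_i=s_it_i-t_is_i$; (A3) $p_i\otimes I_{n_i}-I_{m_i}\otimes s_i^T$ is invertible; (A4) $q_{i+1}\otimes I_{m_i}-I_{m_{i+1}}\otimes q_i^T$ is invertible; (A5) $s_i\otimes I_{m_{i+1}}-I_{n_i}\otimes p_{i+1}^T$ is invertible.
   Context: $I_k$ is the $k\times k$ identity matrix, $\otimes$ is the Kronecker (tensor) product of matrices, $M^T$ is the transpose. By convention the empty $0\times 0$ matrix is invertible (sizes $m_i,n_i$ may be $0$). *)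

(* Defs.v *)
From mathcomp Require Import all_boot all_algebra.
From mathcomp Require Export mxtens.
Set Implicit Arguments. Unset Strict Implicit. Unset Printing Implicit Defensive.
Import GRing.Theory.
Local Open Scope ring_scope.

Definition infinite_type (T : eqType) : Prop :=
  forall s : seq T, exists x : T, x \notin s.

(* Main.v *)
Require Import Defs.
From mathcomp Require Import all_boot all_algebra.
From mathcomp Require Import mxtens.
From mathcomp Require Import ring.
Set Implicit Arguments. Unset Strict Implicit. Unset Printing Implicit Defensive.
Import GRing.Theory.
Local Open Scope ring_scope.



Section Aux.
Variable k : fieldType.
Hypothesis hk : infinite_type k.

Lemma nonroot (p : {poly k}) : p != 0 -> exists x, ~~ root p x.
Proof.
move=> p0.
have H : forall n, (exists x, ~~ root p x) \/
   exists s : seq k, [/\ uniq s, all (root p) s & size s = n].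
  elim=> [|n [hx|[s [us rs ss]]]]; first by right; exists [::].
    by left.
  have [x xs] := hk s.
  case rx: (root p x); last by left; exists x; rewrite rx.
  by right; exists (x :: s); rewrite /= xs us rx rs ss.
case: (H (size p)) => [//|[s [us rs ss]]].
by have := max_poly_roots p0 rs us; rewrite ss ltnn.
Qed.

Lemma shift_unit n (C : 'M[k]_n) : exists mu : k, (C + mu%:M) \in unitmx.
Proof.
have [x hx] := nonroot (monic_neq0 (char_poly_monic C)).
exists (- x); rewrite -row_free_unit -kermx_eq0 raddfN /= -/(eigenspace C x).
have := hx; rewrite -eigenvalue_root_char /eigenvalue /eigenspace.
by rewrite negbK.
Qed.
End Aux.



Lemma tens_shift (k : fieldType) m n (A : 'M[k]_m) (B : 'M[k]_n) a b :
  (A + a%:M) *t (1%:M : 'M_n) - (1%:M : 'M_m) *t (B + b%:M)^T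
  = (A *t 1%:M - 1%:M *t B^T) + (a - b)%:M.
Proof.
apply/matrixP=> i j.
case: (mxtens_indexP i)=> i0 i1; case: (mxtens_indexP j)=> j0 j1.
rewrite !mxE !mxtens_indexK /= (can_eq (@mxtens_indexK _ _)) xpair_eqE.

case: (eqVneq i0 j0) => [->|ne0]; case: (eqVneq i1 j1) => [->|ne1] /=;
  rewrite ?eqxx ?(negPf ne0) ?(negPf ne1) ?(eq_sym j1) ?(negPf ne1) /=;
  rewrite ?mulr1n ?mulr0n ?mulr1 ?mulr0 ?mul1r ?mul0r ?addr0 ?subr0 ?sub0r; try ring.
Qed.

Lemma comm_shift (k : fieldType) m (P Q : 'M[k]_m) a c :
  (P + a%:M) *m (Q + c%:M) - (Q + c%:M) *m (P + a%:M) = P *m Q - Q *m P.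
Proof.
rewrite !mulmxDl !mulmxDr -!scalar_mxM scalar_mxC [Q *m a%:M]scalar_mxC.
rewrite [c * a]mulrC !mul_scalar_mx.
set x := c *: P; set y := a *: Q; set z := (a * c)%:M.
rewrite -[Q *m P + y + _]addrA [y + (x + z)]addrCA -[P *m Q + x + _]addrA.
by rewrite opprD addrACA subrr addr0.
Qed.



Lemma chain (k : fieldType) (good : int -> pred k)
  (h : forall i, exists d, good i d) :
  exists x : int -> k, forall i, good i (x (i + 1) - x i).
Proof.
pose d i := xchoose (h i).
have dP i : good i (d i) := xchooseP (h i).
pose fpos := fix f (n : nat) : k := if n is n'.+1 then f n' + d (Posz n') else 0.
pose fneg := fix f (n : nat) : k := if n is n'.+1 then f n' - d (Negz n') else 0.
exists (fun z => match z with Posz n => fpos n | Negz n => fneg n.+1 end).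
case=> [n|n].
  have -> : Posz n + 1 = Posz n.+1 by rewrite -addn1.
  by rewrite /= addrC addKr.
case: n => [|n].
  have -> : Negz 0 + 1 = Posz 0 by [].
  by rewrite /= sub0r opprB subr0.
have -> : Negz n.+1 + 1 = Negz n by rewrite !NegzE -[(n.+2)%N]addn1 PoszD opprD subrK.
by rewrite /= opprB addrC subrK.
Qed.



Section W.
Variable k : fieldType.

Lemma sum_eq1 N c (f : 'I_N.+1 -> k) :
  \sum_(l < N.+1) ((l : nat) == c)%:R * f l = if (c < N.+1)%N then f (inord c) else 0.
Proof.
case: ltnP => hc.
  rewrite (bigD1 (inord c)) //= inordK // eqxx mul1r big1 ?addr0 // => l hl.
  case: eqP => [e|]; last by rewrite mul0r.
  by case/eqP: hl; apply: val_inj; rewrite /= inordK.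
rewrite big1 // => l _; case: eqP => [e|]; last by rewrite mul0r.
by move: (ltn_ord l); rewrite e ltnNge hc.
Qed.

Lemma sum_eq2 N r (f : 'I_N.+1 -> k) :
  \sum_(l < N.+1) (r == (l : nat).+1)%:R * f l =
   if (0 < r < N.+2)%N then f (inord r.-1) else 0.
Proof.
case: r => [|r] /=.
  by rewrite big1 // => l _; rewrite mul0r.
rewrite -(sum_eq1 r f); apply: eq_bigr => l _; by rewrite eqSS eq_sym.
Qed.

Lemma weyl n : (n.+1)%:R = 0 :> k ->
  exists D X : 'M[k]_n.+1, D *m X - X *m D = 1.
Proof.
move=> hn.
exists (\matrix_(i, j) (((j : nat) == i.+1)%:R * (i.+1)%:R)).
exists (\matrix_(i, j) (((i : nat) == j.+1)%:R)).
apply/matrixP => r s; rewrite !mxE.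
under eq_bigr do rewrite !mxE -mulrA.
rewrite sum_eq1.
under eq_bigr do rewrite !mxE.
rewrite sum_eq2.

have rn := ltn_ord r; have sn := ltn_ord s.
case: r rn => [[|r] rr] /= rn.
  case: (posnP n) => [n0|n0]; first by rewrite n0 in hn; move/eqP: hn; rewrite oner_eq0.
  rewrite ltnS n0 inordK ?ltnS // eqSS subr0 mul1r.
  by [].
rewrite (ltn_trans rr) // [(nat_of_ord s == _)]eq_sym.
case: (ltnP r.+2 n.+1) => h2.
  rewrite inordK // eqSS !inordK ?(ltn_trans _ h2) //=.
  rewrite (_ : (Ordinal rr == s) = (r.+1 == s)) //.
  case: eqP => _; last by rewrite !mulr0 mul0r subrr.
  by rewrite mulr1 mul1r -addn1 natrD addrAC subrr add0r.
rewrite sub0r inordK ?(ltn_trans (ltnSn r) rr) //= (_ : (Ordinal rr == s) = (r.+1 == s)) //.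
case: eqP => [e|]; last by rewrite mul0r oppr0.
have rn' : r.+1 = n by apply/eqP; rewrite eqn_leq -ltnS rr -ltnS h2.
rewrite mul1r; rewrite -rn' -addn1 natrD in hn.
by apply/eqP; rewrite eq_sym -subr_eq0 opprK addrC hn.
Qed.
End W.



Section Corner.
Variable k : fieldType.

Lemma dmulE m n p (i : 'I_m) (j : 'I_n) (M : 'M[k]_(n, p)) r s :
  (delta_mx i j *m M) r s = (r == i)%:R * M j s.
Proof.
rewrite mxE (bigD1 j) //= big1 ?addr0 => [|l lj]; rewrite !mxE ?eqxx ?andbT //.
by rewrite (negPf lj) andbF mul0r.
Qed.

Lemma muldE m n p (i : 'I_n) (j : 'I_p) (M : 'M[k]_(m, n)) r s :
  (M *m delta_mx i j) r s = M r i * (s == j)%:R.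
Proof.
rewrite mxE (bigD1 i) //= big1 ?addr0 => [|l li]; rewrite !mxE ?eqxx //.
by rewrite (negPf li) mulr0.
Qed.

Lemma addE m n (A B : 'M[k]_(m, n)) r s : (A + B) r s = A r s + B r s.
Proof. by rewrite mxE. Qed.
Lemma oppE m n (A : 'M[k]_(m, n)) r s : (- A) r s = - A r s.
Proof. by rewrite !mxE. Qed.
Lemma scaleE m n a (A : 'M[k]_(m, n)) r s : (a *: A) r s = a * A r s.
Proof. by rewrite mxE. Qed.

Lemma conjE n (i j : 'I_n) t (M : 'M[k]_n) r s : i != j ->
  ((1 + t *: delta_mx i j) *m M *m (1 - t *: delta_mx i j)) r s =
  M r s + t * ((r == i)%:R * M j s - M r i * (s == j)%:R)
   - t ^+ 2 * ((r == i)%:R * M j i * (s == j)%:R).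
Proof.
move=> ij.
rewrite mulmxDl mul1mx mulmxBr mulmx1 mulmxDl -scalemxAl -!scalemxAr -scalemxAl.
rewrite -mulmxA !(addE, oppE, scaleE) !dmulE !muldE.
ring.
Qed.

Lemma conj_inv n (i j : 'I_n) t : i != j ->
  (1 + t *: delta_mx i j) *m (1 - t *: delta_mx i j) = 1 :> 'M[k]_n /\
  (1 - t *: delta_mx i j) *m (1 + t *: delta_mx i j) = 1 :> 'M[k]_n.
Proof.
move=> ij; have E0 : delta_mx i j *m delta_mx i j = 0 :> 'M[k]_n.
  by rewrite mul_delta_mx_0 // eq_sym.
have E1 : (t *: delta_mx i j) *m (t *: delta_mx i j) = 0 :> 'M[k]_n.
  by rewrite -scalemxAl -scalemxAr E0 !scaler0.
split.
  by rewrite mulmxBr mulmx1 mulmxDl mul1mx E1 addr0 addrK.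
by rewrite mulmxDr mulmx1 mulmxBl mul1mx E1 subr0 subrK.
Qed.

Definition has_corner n (M : 'M[k]_n.+1) := exists S T : 'M[k]_n.+1,
  [/\ S *m T = 1, T *m S = 1 & (S *m M *m T) 0 0 = 0].

Lemma corner_col n (M : 'M[k]_n.+1) j : j != 0 -> M j 0 != 0 -> has_corner M.
Proof.
move=> j0 mj; set t := - (M 0 0 / M j 0).
have ij : (0 : 'I_n.+1) != j by rewrite eq_sym.
have [h1 h2] := conj_inv t ij.
exists (1 + t *: delta_mx 0 j), (1 - t *: delta_mx 0 j); split => //.
rewrite conjE // eqxx (negPf ij) /= !mul1r !mulr0 !subr0 /t.
by rewrite mulNr divfK // subrr.
Qed.

Lemma corner_row n (M : 'M[k]_n.+1) j : j != 0 -> M 0 j != 0 -> has_corner M.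
Proof.
move=> j0 mj; set t := M 0 0 / M 0 j.
have [h1 h2] := conj_inv t j0.
exists (1 + t *: delta_mx j 0), (1 - t *: delta_mx j 0); split => //.
rewrite conjE // eqxx eq_sym (negPf j0) /= !mul0r !mulr1 sub0r !mulr0 subr0 /t.
by rewrite mulrN divfK // subrr.
Qed.

Lemma corner n (M : 'M[k]_n.+1) : ~~ is_scalar_mx M -> has_corner M.
Proof.
move=> ns.
case: (boolP [exists j : 'I_n.+1, (j != 0) && (M j 0 != 0)]) =>
   [/existsP [j /andP[j0 mj]]|hc]; first exact: corner_col mj.
case: (boolP [exists j : 'I_n.+1, (j != 0) && (M 0 j != 0)]) =>
   [/existsP [j /andP[j0 mj]]|hr]; first exact: corner_row mj.
have hc' j : j != 0 -> M j 0 = 0.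
  move=> j0; apply/eqP; move: hc; rewrite negb_exists => /forallP /(_ j).
  by rewrite j0 /= negbK.
have hr' j : j != 0 -> M 0 j = 0.
  move=> j0; apply/eqP; move: hr; rewrite negb_exists => /forallP /(_ j).
  by rewrite j0 /= negbK.
have [r [s rs]] : exists r s, M r s != (r == s)%:R * M 0 0.
  case: (boolP [exists r, exists s, M r s != (r == s)%:R * M 0 0]) =>
     [/existsP [r /existsP [s h]]|]; first by exists r, s.
  rewrite negb_exists => /forallP H; case/negP: ns; apply/is_scalar_mxP.
  exists (M 0 0); apply/matrixP => r s; move: (H r); rewrite negb_exists => /forallP /(_ s).
  by rewrite negbK => /eqP ->; rewrite mxE mulr_natl.
have r0 : r != 0.
  apply: contra rs => /eqP ->; case: (eqVneq s 0) => [->|s0]; first by rewrite mul1r.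
  by rewrite hr' // mul0r.
have s0 : s != 0.
  apply: contra rs => /eqP ->; case: (eqVneq r 0) => [->|r0']; first by rewrite mul1r.
  by rewrite hc' // mul0r.
have [h1 h2] := conj_inv (1 : k) s0.
move: h1 h2; set S1 := (1 + _); set T1 := (1 - _) => h1 h2.
have : (S1 *m M *m T1) r 0 != 0.
  rewrite conjE // (hc' r) // (hr' s) // eqxx.
  rewrite !mul1r expr1n mul1r mulr0 mul0r subr0 add0r mulr1.
  by rewrite subr_eq0 eq_sym.
move/(corner_col r0) => [S2 [T2 [e1 e2 e3]]].
exists (S2 *m S1), (T1 *m T2); split.
- by rewrite -mulmxA (mulmxA S1) h1 mul1mx e1.
- by rewrite -mulmxA (mulmxA T2) e2 mul1mx h2.
by rewrite -e3 !mulmxA.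
Qed.
End Corner.



Theorem commutator (k : fieldType) (hk : infinite_type k) n (M : 'M[k]_n) :
  \tr M = 0 -> exists P Q : 'M[k]_n, M = P *m Q - Q *m P.
Proof.
elim: n M => [|n IH] M trM.
  by exists 0, 0; rewrite [M]flatmx0 [_ - _]flatmx0.
case: (boolP (is_scalar_mx M)) => [/is_scalar_mxP [a eM]|ns].
  rewrite eM mxtrace_scalar in trM; rewrite eM.
  case: (eqVneq a 0) => [->|a0].
    by exists 0, 0; rewrite mul0mx subrr raddf0.
  have hn : (n.+1)%:R = 0 :> k.
    apply/eqP; move: trM; rewrite -[a *+ _]mulr_natr => /eqP; rewrite mulf_eq0.
    by rewrite (negPf a0).
  have [D [X e]] := weyl hn.
  by exists (a *: D), X; rewrite -scalemxAl -scalemxAr -scalerBr e scalemx1.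
have [S [T [ST TS c0]]] := corner ns.
set M2 := S *m M *m T.
have trM2 : \tr M2 = 0 by rewrite /M2 mxtrace_mulC mulmxA TS mul1mx.
suff [P [Q e]] : exists P Q : 'M[k]_n.+1, M2 = P *m Q - Q *m P.
  exists (T *m P *m S), (T *m Q *m S).
  have h X Y : T *m X *m S *m (T *m Y *m S) = T *m (X *m Y) *m S.
    by rewrite -!mulmxA (mulmxA S T) ST mul1mx.
  rewrite !h -mulmxBl -mulmxBr -e /M2 !mulmxA TS mul1mx -mulmxA TS mulmx1 //.
have eM2 := submxK (M2 : 'M_(1 + n)).
move: eM2 c0 trM2; set a := ulsubmx _; set u := ursubmx _; set v := dlsubmx _.
set M' := drsubmx _ => eM2 c0 trM2.
have a0 : a = 0.
  apply/matrixP => i j; rewrite !ord1 [a _ _]mxE [usubmx _ _ _]mxE [RHS]mxE.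
  by rewrite (_ : lshift n 0 = 0) ?c0 //; apply: val_inj.
have trM' : \tr M' = 0.
  rewrite -trM2 -eM2; transitivity (\tr a + \tr M').
    by rewrite a0 mxtrace0 add0r.
  exact: (esym (mxtrace_block a u v M')).
have [P' [Q' eM']] := IH M' trM'.
have [mu hmu] := shift_unit hk P'.
set B := P' + mu%:M in hmu.
pose P : 'M_(1 + n) := block_mx (- mu)%:M 0 0 P'.
pose Q : 'M_(1 + n) := block_mx 0 (- (u *m invmx B)) (invmx B *m v) Q'.
exists P, Q.
suff e : (block_mx a u v M' : 'M_(1 + n)) = P *m Q - Q *m P.
  by rewrite -eM2; exact: e.
rewrite /P /Q !mulmx_block opp_block_mx add_block_mx a0 eM'.
rewrite !mulmx0 !mul0mx !addr0 !add0r.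
congr block_mx.
- by rewrite oppr0.
- rewrite mul_scalar_mx scaleNr scalerN opprK mulNmx opprK addrC.
  by rewrite -mul_mx_scalar -mulmxDr -mulmxA mulVmx // mulmx1.
- rewrite mul_mx_scalar scaleNr opprK -mul_scalar_mx -mulmxDl mulmxA.
  by rewrite mulmxV // mul1mx.
Qed.

Unset Implicit Arguments.


Theorem lemmaA (k : fieldType) (hk : infinite_type k)
  (m n : int -> nat)
  (M : forall i : int, 'M[k]_(m i)) (N : forall i : int, 'M[k]_(n i))
  (hM : forall i, \tr (M i) = 0) (hN : forall i, \tr (N i) = 0) :
  exists (p q : forall i : int, 'M[k]_(m i)) (s t : forall i : int, 'M[k]_(n i)),
    forall i : int,
      [/\ M i = p i *m q i - q i *m p i,
          N i = s i *m t i - t i *m s i,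
          (p i *t (1%:M : 'M[k]_(n i)) - (1%:M : 'M[k]_(m i)) *t (s i)^T) \in unitmx,
          (q (i + 1) *t (1%:M : 'M[k]_(m i)) - (1%:M : 'M[k]_(m (i + 1))) *t (q i)^T)
            \in unitmx
        & (s i *t (1%:M : 'M[k]_(m (i + 1))) - (1%:M : 'M[k]_(n i)) *t (p (i + 1))^T)
            \in unitmx].
Proof.
have exM i : exists PQ : 'M[k]_(m i) * 'M[k]_(m i), M i == PQ.1 *m PQ.2 - PQ.2 *m PQ.1.
  by have [P [Q e]] := commutator hk (hM i); exists (P, Q); rewrite e.
have exN i : exists PQ : 'M[k]_(n i) * 'M[k]_(n i), N i == PQ.1 *m PQ.2 - PQ.2 *m PQ.1.
  by have [P [Q e]] := commutator hk (hN i); exists (P, Q); rewrite e.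
pose p0 i := (xchoose (exM i)).1; pose q0 i := (xchoose (exM i)).2.
pose s0 i := (xchoose (exN i)).1; pose t0 i := (xchoose (exN i)).2.
have eM i : M i = p0 i *m q0 i - q0 i *m p0 i by apply/eqP; exact: xchooseP (exM i).
have eN i : N i = s0 i *m t0 i - t0 i *m s0 i by apply/eqP; exact: xchooseP (exN i).
pose G3 i := p0 i *t (1%:M : 'M[k]_(n i)) - (1%:M : 'M[k]_(m i)) *t (s0 i)^T.
pose G4 i := q0 (i + 1) *t (1%:M : 'M[k]_(m i)) - (1%:M : 'M[k]_(m (i + 1))) *t (q0 i)^T.
pose G5 i := s0 i *t (1%:M : 'M[k]_(m (i + 1))) - (1%:M : 'M[k]_(n i)) *t (p0 (i + 1))^T.
have [c hc] := @chain _ (fun i d => (G4 i + d%:M) \in unitmx) (fun i => shift_unit hk (G4 i)).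
have exy i : exists y : k, (G3 i + (- y)%:M) \in unitmx.
  by have [mu h] := shift_unit hk (G3 i); exists (- mu); rewrite opprK.
pose y i := xchoose (exy i).
have hy i : (G3 i + (- y i)%:M) \in unitmx := xchooseP (exy i).
have ex5 i : exists d : k, (G5 i + (y i - d)%:M) \in unitmx.
  by have [mu h] := shift_unit hk (G5 i); exists (y i - mu); rewrite opprB addrCA subrr addr0.
have [x hx] := @chain _ (fun i d => (G5 i + (y i - d)%:M) \in unitmx) ex5.
exists (fun i => p0 i + (x i)%:M), (fun i => q0 i + (c i)%:M).
exists (fun i => s0 i + (x i + y i)%:M), (fun i => t0 i + 0%:M).
move=> i; split.
- by rewrite comm_shift eM.
- by rewrite comm_shift eN.
- rewrite tens_shift -/(G3 i).
  by have -> : x i - (x i + y i) = - y i by ring.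
- by rewrite tens_shift -/(G4 i); exact: hc.
- rewrite tens_shift -/(G5 i).
  have -> : x i + y i - x (i + 1) = y i - (x (i + 1) - x i) by ring.
  exact: hx.
Qed.
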